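(* Let $t\ge 3$. Consider a position in the Strong Ramsey game $\mathcal{R}(K_{\aleph_0}^{(3)}, K^{(3)}_{2,t+1}(t-2))$ in which $P_2$ has claimed all edges of a copy of $K^{(3)}_{2,t}(t-2)$ with main vertices $x,y$ and center $c$, and suppose that (i) $P_1$ does not have a threat; (ii) $P_1$ has not claimed all edges of a copy of $K_{2,t}^{(3)}$ whose center is $c$ and one of whose main vertices is $x$; (iii) $P_1$ has not claimed all edges of a copy of $K_{2,t}^{(3)}$ whose center is $x$ and one of whose main vertices is $c$. If it is $P_2$'s turn, then $P_2$ has a strategy from this position guaranteeing that $P_1$ never claims all edges of a copy of $K^{(3)}_{2,t+1}(t-2)$ (a drawing strategy).
   Context: Strong Ramsey game $\mathcal{R}(B,G)$: players $P_1$, $P_2$ alternately claim unclaimed edges of the $k$-uniform hypergraph $B$, $P_1$ first; the first to claim all edges of a copy of the finite $k$-uniform hypergraph $G$ wins; if nobody does so in finitely many moves the game is a draw. $K_{\aleph_0}^{(3)}$ is the complete $3$-uniform hypergraph on a countably infinite vertex set. For $s\ge0$, $t\ge3$, $K_{2,t}(s)$ is the graph obtained from $K_{2,t}$ by identifying the center of a star with $s$ leaves (the leaves being new vertices) with one of the two vertices of degree $t$. For a graph $H$, $H^{(3)}$ is the $3$-uniform hypergraph obtained by adding one fixed new vertex (the center) to every edge of $H$. Main vertices of $K_{2,t}(s)^{(3)}$ and $K_{2,t}^{(3)}$: the vertices of degree at least $3$ in the underlying graph, i.e. the two vertices of the part of size $2$ of $K_{2,t}$. $P_1$ has a threat if she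 has claimed all edges of a copy of $K^{(3)}_{2,t+1}(t-2)$ minus one edge $e$, where the edge of the board corresponding to $e$ is claimed by neither player. *)

(* Defs.v *)
From mathcomp Require Import all_boot finmap.
Set Implicit Arguments. Unset Strict Implicit. Unset Printing Implicit Defensive.
Local Open Scope fset_scope.

(* Vertices of K_{aleph_0}^{(3)} are natural numbers; an edge (board element)
   is a 3-element finite set of naturals. *)
Definition edge := {fset nat}.
Definition is_edge (e : edge) : bool := #|` e| == 3.

(* The edges of the 3-graph K_{2,t}(s)^{(3)} placed on the board with
   center c, main vertices x (the one carrying the star) and y,
   common neighbours Z (|Z| = t) and star leaves W (|W| = s). *)
Definition K_edges (c x y : nat) (Z W : seq nat) : seq edge :=
  [seq [fset c; x; z] | z <- Z] ++ [seq [fset c; y; z] | z <- Z]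
  ++ [seq [fset c; x; w] | w <- W].

Definition K_valid (t s c x y : nat) (Z W : seq nat) : bool :=
  [&& uniq (c :: x :: y :: Z ++ W), size Z == t & size W == s].

Definition K_copy_in (P : seq edge) (t s c x y : nat) : Prop :=
  exists Z W : seq nat, K_valid t s c x y Z W /\ {subset K_edges c x y Z W <= P}.

Definition has_target (t : nat) (P : seq edge) : Prop :=
  exists c x y, K_copy_in P t.+1 (t - 2) c x y.

Definition threat (t : nat) (A B : seq edge) : Prop :=
  exists c x y (Z W : seq nat) (e : edge),
    [/\ K_valid t.+1 (t - 2) c x y Z W, e \in K_edges c x y Z W,
        e \notin A, e \notin B &
        {in K_edges c x y Z W, forall f, f != e -> f \in A}].

(* Continuation of the game from the position (A, B) with P_2 to move:
   m k is the k-th move after the position; even k are P_2's moves,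
   odd k are P_1's moves. *)
Definition history (m : nat -> edge) (k : nat) : seq edge := map m (iota 0 k).

Definition legal_move (A B : seq edge) (m : nat -> edge) (k : nat) : bool :=
  is_edge (m k) && (m k \notin A ++ B ++ history m k).

Definition claimed1 (A : seq edge) (m : nat -> edge) (k : nat) : seq edge :=
  A ++ [seq m i | i <- iota 0 k & odd i].
Definition claimed2 (B : seq edge) (m : nat -> edge) (k : nat) : seq edge :=
  B ++ [seq m i | i <- iota 0 k & ~~ odd i].

(* sigma is a drawing strategy for P_2 from (A, B) with P_2 to move:
   in every play following sigma (with P_1 playing legally), P_2's moves are
   legal and P_1 never completes a copy of the target unless P_2 has already
   completed one (which ends the game earlier). *)
Definition P2_draw_strategy (t : nat) (A B : seq edge) (sigma : seq edge -> edge) : Prop :=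
  forall m : nat -> edge,
    (forall k, ~~ odd k -> m k = sigma (history m k)) ->
    (forall k, odd k -> legal_move A B m k) ->
    (forall k, ~~ odd k -> legal_move A B m k) /\
    (forall k, has_target t (claimed1 A m k) -> has_target t (claimed2 B m k)).

(* Main.v *)
Require Import Defs.
From mathcomp Require Import all_boot finmap zify.
Set Implicit Arguments. Unset Strict Implicit. Unset Printing Implicit Defensive.
Local Open Scope fset_scope.

Lemma mem3 (a b c v : nat) : (v \in [fset a; b; c]) = [|| v == a, v == b | v == c].
Proof. by rewrite !inE orbA. Qed.

Lemma card3 (a b c : nat) : a != b -> a != c -> b != c -> #|` [fset a; b; c]| = 3.
Proof. move=> ab ac bc. rewrite fsetUC cardfsU1 cardfs2 !inE.
  by rewrite (eq_sym c a) (eq_sym c b) negb_or ac bc ab. Qed.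

Lemma fset3_neq (a b u1 u2 : nat) : u1 != a -> u1 != b -> u1 != u2 ->
  [fset a; b; u1] != [fset a; b; u2].
Proof.
move=> h1 h2 h3; apply/negP => /eqP E.
have : u1 \in [fset a; b; u2] by rewrite -E mem3 eqxx !orbT.
by rewrite mem3 (negbTE h1) (negbTE h2) (negbTE h3).
Qed.

Lemma valid_facts t s c x y Z W : K_valid t s c x y Z W ->
  [/\ [/\ c != x, c != y & x != y], [/\ c \notin Z, x \notin Z, y \notin Z & uniq Z],
      [/\ c \notin W, x \notin W, y \notin W & uniq W],
      (forall u, u \in Z -> u \notin W) & (size Z = t /\ size W = s)].
Proof.
rewrite /K_valid => /and3P [Hu /eqP -> /eqP ->].
move: Hu; rewrite /= !inE !mem_cat !negb_or cat_uniq.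
move=> /andP [/and3P [cx cy /andP [cZ cW]]] /andP [/andP [xy /andP [xZ xW]]] /andP [/andP [yZ yW]].
move=> /and3P [uZ ZW uW].
split; do ?split => //.
move=> u uZ'; apply/negP => uW'; move/hasP: ZW; apply; by exists u.
Qed.

Lemma size_le1 (s : seq nat) : uniq s -> (forall a b, a \in s -> b \in s -> a = b) -> size s <= 1.
Proof.
case: s => [|a [|b s]] //= /andP [ab _] H.
have := H a b; rewrite !inE !eqxx orbT => /(_ isT isT) E.
by move: ab; rewrite E inE eqxx.
Qed.

Lemma K_edgesP c x y Z W g : g \in K_edges c x y Z W ->
 exists u, [\/ u \in Z /\ g = [fset c;x;u], u \in Z /\ g = [fset c;y;u] | u \in W /\ g = [fset c;x;u]].
Proof.
rewrite /K_edges !mem_cat => /orP [|/orP []] /mapP [u uin ->]; exists u; by [constructor 1|constructor 2|constructor 3].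
Qed.

Lemma K_edges_Zx c x y Z W u : u \in Z -> [fset c;x;u] \in K_edges c x y Z W.
Proof. by move=> uZ; rewrite /K_edges !mem_cat; apply/orP; left; apply/mapP; exists u. Qed.
Lemma K_edges_Zy c x y Z W u : u \in Z -> [fset c;y;u] \in K_edges c x y Z W.
Proof. by move=> uZ; rewrite /K_edges !mem_cat; apply/orP; right; apply/orP; left; apply/mapP; exists u. Qed.
Lemma K_edges_W c x y Z W u : u \in W -> [fset c;x;u] \in K_edges c x y Z W.
Proof. by move=> uZ; rewrite /K_edges !mem_cat; apply/orP; right; apply/orP; right; apply/mapP; exists u. Qed.

Lemma pigeon (g1 g2 g3 a b : edge) : g1 != g2 -> g1 != g3 -> g2 != g3 ->
  g1 = a \/ g1 = b -> g2 = a \/ g2 = b -> g3 = a \/ g3 = b -> False.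
Proof. move=> n12 n13 n23 [] E1 [] E2 [] E3; subst; by rewrite ?eqxx in n12 n13 n23. Qed.

Lemma noTarget t A B c x (S : seq edge) (e : edge) (Fz : nat -> Prop) :
 1 < t -> ~ has_target t A -> ~ threat t A B ->
 ~ (exists y', K_copy_in A t 0 c x y') -> ~ (exists y', K_copy_in A t 0 x c y') ->
 c != x -> e \notin B ->
 (forall z, Fz z -> [/\ z != c, z != x & forall g, g \in A -> z \notin g]) ->
 (forall g, g \in S -> [\/ g \in A, g = e | exists2 z, Fz z & g = [fset c; x; z]]) ->
 ~ has_target t S.
Proof.
move=> t1 HA Hthr Hii Hiii cx eB HF HS [c' [x' [y' [Z [W [Hv Hsub]]]]]].
have [[c'x' c'y' x'y'] [c'Z x'Z y'Z uZ] _ _ [sZ _]] := valid_facts Hv.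
case: (boolP (all (fun g => (g \in A) || (g == e)) (K_edges c' x' y' Z W))) => Hall.
  case: (boolP (e \in A)) => eA.
    apply: HA; exists c', x', y', Z, W; split => // g gT.
    by case/orP: (allP Hall g gT) => // /eqP ->.
  case: (boolP (e \in K_edges c' x' y' Z W)) => eT.
    apply: Hthr; exists c', x', y', Z, W, e; split => // g gT ne.
    by move: (allP Hall g gT); rewrite (negbTE ne) orbF.
  apply: HA; exists c', x', y', Z, W; split => // g gT.
  case/orP: (allP Hall g gT) => // /eqP E; by move: eT; rewrite -E gT.
have [f fT] := allPn Hall; rewrite negb_or => /andP [fA fe].
case: (HS f (Hsub f fT)) => [fA'|fe'|[z Fzz fX]]; first by rewrite fA' in fA.
  by rewrite fe' eqxx in fe.
have [zc zx zA] := HF z Fzz.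
have Hz : forall g, g \in S -> z \in g -> g = e \/ g = [fset c; x; z].
  move=> g gS; case: (HS g gS) => [gA|->|[z2 Fz2 ->]] zg; first by rewrite (negbTE (zA g gA)) in zg.
    by left.
  right; move: zg; rewrite mem3 (negbTE zc) (negbTE zx) /= => /eqP ->. done.
have zmain : [/\ z != c', z != x' & z != y'].
  have : 3 <= size Z by rewrite sZ.
  case EZ: Z => [|z1 [|z2 [|z3 Z0]]] //= _.
  have i1 : z1 \in Z by rewrite EZ inE eqxx.
  have i2 : z2 \in Z by rewrite EZ !inE eqxx orbT.
  have i3 : z3 \in Z by rewrite EZ !inE eqxx !orbT.
  have n12 : z1 != z2 by move: uZ; rewrite EZ /= !inE negb_or => /andP [/andP []].
  have n13 : z1 != z3 by move: uZ; rewrite EZ /= !inE !negb_or => /andP [/and3P []].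
  have n23 : z2 != z3 by move: uZ; rewrite EZ /= !inE !negb_or => /andP [_ /andP [/andP []]].
  have nc : forall u, u \in Z -> [/\ u != c', u != x' & u != y'].
    move=> u uZ'; split; apply/negP => /eqP E; subst u; by [rewrite uZ' in c'Z|rewrite uZ' in x'Z|rewrite uZ' in y'Z].
  have [c1 x1 y1] := nc _ i1; have [c2 x2 y2] := nc _ i2; have [c3 x3 y3] := nc _ i3.
  have three : forall p, (p = x' \/ p = y') -> z \in [fset c'; p; z1] -> z \in [fset c'; p; z2] -> z \in [fset c'; p; z3] -> False.
    move=> p Hp j1 j2 j3.
    have inT : forall u, u \in Z -> [fset c';p;u] \in S.
      by case: Hp => -> u uZ'; apply: Hsub; [apply: K_edges_Zx | apply: K_edges_Zy].
    have pp : forall u, u \in Z -> u != p by case: Hp => -> u /nc [].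
    apply: (pigeon _ _ _ (Hz _ (inT z1 i1) j1) (Hz _ (inT z2 i2) j2) (Hz _ (inT z3 i3) j3));
      apply: fset3_neq => //; exact: pp.
  split; apply/negP => /eqP E.
  - by apply: (three x'); [left|..]; rewrite // mem3 E eqxx.
  - by apply: (three x'); [left|..]; rewrite // mem3 E eqxx ?orbT.
  - by apply: (three y'); [right|..]; rewrite // mem3 E eqxx ?orbT.
have [zc' zx' zy'] := zmain.
have [p [q [Hpq [u0 fE]]]] : exists p q, ((p = x' /\ q = y') \/ (p = y' /\ q = x')) /\ exists u, f = [fset c'; p; u].
  have [u [[_ ->]|[_ ->]|[_ ->]]] := K_edgesP fT.
  - by exists x', y'; split; [left|exists u].
  - by exists y', x'; split; [right|exists u].
  - by exists x', y'; split; [left|exists u].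
have [pc' qc' pq [pZ qZ]] : [/\ p != c', q != c', p != q & p \notin Z /\ q \notin Z].
  case: Hpq => [[-> ->]|[-> ->]]; (do !split) => //; by rewrite eq_sym.
have pqT : forall u, u \in Z -> [fset c';p;u] \in S /\ [fset c';q;u] \in S.
  case: Hpq => [[-> ->]|[-> ->]].
  - by move=> u' uZ'; split; apply: Hsub; [apply: K_edges_Zx | apply: K_edges_Zy].
  - by move=> u' uZ'; split; apply: Hsub; [apply: K_edges_Zy | apply: K_edges_Zx].
have zp : z != p by case: Hpq => [[-> _]|[-> _]].
have E : [fset c; x; z] = [fset c'; p; z].
  have : z \in f by rewrite fX mem3 eqxx !orbT.
  by rewrite fE mem3 (negbTE zc') (negbTE zp) /= => /eqP Ezu; rewrite -fX fE Ezu.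
have cxcase : (c = c' /\ x = p) \/ (c = p /\ x = c').
  have : c \in [fset c'; p; z] by rewrite -E mem3 eqxx.
  have : x \in [fset c'; p; z] by rewrite -E mem3 eqxx orbT.
  rewrite !mem3 (eq_sym x z) (eq_sym c z) (negbTE zx) (negbTE zc) !orbF.
  case/orP => /eqP Ex; case/orP => /eqP Ec.
  - by rewrite Ex Ec eqxx in cx.
  - by right.
  - by left.
  - by rewrite Ex Ec eqxx in cx.
have pin : forall w, p \in [fset c; x; w].
  by move=> w; case: cxcase => [[_ <-]|[<- _]]; rewrite mem3 eqxx ?orbT.
have cxin : forall v w, v \in [fset c; x; w] -> v != w -> (v == c') || (v == p).
  move=> v w; rewrite mem3; case: cxcase => [[-> ->]|[-> ->]].
    by case/or3P => ->; rewrite ?orbT // eqxx.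
  by case/or3P => ->; rewrite ?orbT // eqxx.
pose good u := ([fset c'; p; u] \in A) && ([fset c'; q; u] \in A).
have bad : forall u, u \in Z -> ~~ good u -> e = [fset c'; p; u] \/ e = [fset c'; q; u].
  move=> u uZ' ng.
  have [gpS gqS] := pqT u uZ'.
  have uc' : u != c' by apply/negP => /eqP E'; rewrite -E' uZ' in c'Z.
  have up : u != p by apply/negP => /eqP E'; rewrite -E' uZ' in pZ.
  have uq : u != q by apply/negP => /eqP E'; rewrite -E' uZ' in qZ.
  case: (boolP ([fset c'; q; u] \in A)) => gqA.
    have gpA : [fset c'; p; u] \notin A by move: ng; rewrite /good gqA andbT.
    case: (HS _ gpS) => [gpA'|E'|[z2 Fz2 E']]; first by rewrite gpA' in gpA.
      by left.
    exfalso.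
    have uz2 : u \in [fset c; x; z2] by rewrite -E' mem3 eqxx !orbT.
    case: (eqVneq u z2) => [Euz|nuz].
      have [_ _ zA2] := HF z2 Fz2.
      by move: (zA2 _ gqA); rewrite -Euz mem3 eqxx !orbT.
    by move: (cxin u z2 uz2 nuz); rewrite (negbTE uc') (negbTE up).
  case: (HS _ gqS) => [gqA'|E'|[z2 Fz2 E']]; first by rewrite gqA' in gqA.
    by right.
  exfalso; move: (pin z2); rewrite -E' mem3 (negbTE pc') (negbTE pq) /=.
  by rewrite eq_sym (negbTE up).
have bad1 : size (filter (predC good) Z) <= 1.
  apply: size_le1; first exact: filter_uniq.
  move=> u1 u2; rewrite !mem_filter => /andP [ng1 u1Z] /andP [ng2 u2Z].
  have u2c' : u2 != c' by apply/negP => /eqP E'; rewrite -E' u2Z in c'Z.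
  have u2p : u2 != p by apply/negP => /eqP E'; rewrite -E' u2Z in pZ.
  have u2q : u2 != q by apply/negP => /eqP E'; rewrite -E' u2Z in qZ.
  have u2e : u2 \in e by case: (bad u2 u2Z ng2) => ->; rewrite mem3 eqxx !orbT.
  apply/esym/eqP; move: u2e.
  by case: (bad u1 u1Z ng1) => ->; rewrite mem3 (negbTE u2c') ?(negbTE u2p) ?(negbTE u2q).
have cnt : t <= size (filter good Z).
  have := count_predC good Z; rewrite sZ size_filter => H.
  move: bad1; rewrite size_filter; lia.
have Hcopy : K_copy_in A t 0 c' p q.
  exists (take t (filter good Z)), [::]; split.
    have mZ : forall u, u \in take t (filter good Z) -> u \in Z.
      by move=> u /mem_take; rewrite mem_filter => /andP [].
    rewrite /K_valid cats0 size_takel // eqxx /= andbT.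
    rewrite !inE !negb_or pq (eq_sym c' p) (eq_sym c' q) pc' qc' /=.
    rewrite take_uniq ?filter_uniq // andbT.
    apply/and3P; split; apply/negP => /mZ; by [rewrite (negbTE c'Z)|rewrite (negbTE pZ)|rewrite (negbTE qZ)].
  move=> g /K_edgesP [u [[uin ->]|[uin ->]|[]]] //; 
    by move: uin => /mem_take; rewrite mem_filter => /andP [/andP [? ?] _].
case: cxcase => [[Ec Ex]|[Ec Ex]]; [apply: Hii|apply: Hiii]; exists q; by rewrite Ec Ex.
Qed.

Lemma extend_copy t s (P B : seq edge) c a b z : K_copy_in B t s c a b -> {subset B <= P} ->
  [fset c;a;z] \in P -> [fset c;b;z] \in P -> (forall g, g \in B -> z \notin g) ->
  z != c -> z != a -> z != b -> K_copy_in P t.+1 s c a b.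
Proof.
move=> [Z [W [Hv Hs]]] BP ia ib zB zc za zb.
exists (z :: Z), W; split.
  have zZW : z \notin Z ++ W.
    rewrite mem_cat; apply/negP => /orP [] zin.
      by move: (zB _ (Hs _ (K_edges_Zx c a b W zin))); rewrite mem3 eqxx !orbT.
    by move: (zB _ (Hs _ (K_edges_W c a b Z zin))); rewrite mem3 eqxx !orbT.
  move: Hv; rewrite /K_valid => /and3P [Hu /eqP Hz Hw].
  rewrite (perm_uniq (s2 := z :: c :: a :: b :: Z ++ W)); last first.
    by rewrite (perm_catCA [:: c; a; b] [:: z] (Z ++ W)).
  rewrite cons_uniq Hu andbT /= Hz eqxx Hw andbT.
  by rewrite !inE !negb_or zc za zb zZW.
move=> g gin.
have : [|| g == [fset c;a;z], g == [fset c;b;z] | g \in K_edges c a b Z W].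
  move: gin; rewrite /K_edges /= !mem_cat !inE.
  set m1 := [seq [fset c; a; z0] | z0 <- Z]. set m2 := [seq [fset c; b; z0] | z0 <- Z]. set m3 := [seq [fset c; a; z0] | z0 <- W].
  rewrite !mem_cat inE mem_cat.
  by case: (g == [fset c; a; z]); case: (g == [fset c; b; z]); case: (g \in m1); case: (g \in m2); case: (g \in m3).
case/or3P => [/eqP ->|/eqP ->|] //; move/Hs; exact: BP.
Qed.

Definition vmax (s : seq edge) : nat := \max_(g <- s) \max_(v <- g) v.
Lemma vmaxP (s : seq edge) g v : g \in s -> v \in g -> v <= vmax s.
Proof. move=> gs vg.
  have h1 := (@leq_bigmax_seq _ s xpredT (fun g : edge => \max_(v <- g) v) g gs (erefl true)).
  apply: leq_trans h1.
  by have := (@leq_bigmax_seq _ (enum_fset g) xpredT id v vg (erefl true)). Qed.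

Definition fresh (A B : seq edge) (c x y : nat) (h : seq edge) : nat :=
  (maxn (maxn c (maxn x y)) (vmax (A ++ B ++ h))).+1.

Lemma fresh_notin A B c x y h g : g \in A ++ B ++ h -> fresh A B c x y h \notin g.
Proof.
move=> gin; apply/negP => /(vmaxP gin); rewrite /fresh.
set M := vmax _; move=> H; have := leq_maxr (maxn c (maxn x y)) M; lia.
Qed.

Lemma fresh_neq A B c x y h : [/\ fresh A B c x y h != c, fresh A B c x y h != x & fresh A B c x y h != y].
Proof. rewrite /fresh; set M := vmax _; have := leq_maxl (maxn c (maxn x y)) M.
have := leq_maxl x y; have := leq_maxr x y; have := leq_maxl c (maxn x y); have := leq_maxr c (maxn x y).
split; apply/eqP; lia. Qed.

Definition strat A B c x y (h : seq edge) : edge :=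
  let k := size h in let z0 := fresh A B c x y (take (k - 2) h) in
  if (1 < k) && (nth fset0 h (k - 2) == [fset c; y; z0]) && (nth fset0 h (k - 1) != [fset c; x; z0])
  then [fset c; x; z0] else [fset c; y; fresh A B c x y h].

Lemma size_history m k : size (history m k) = k.
Proof. by rewrite /history size_map size_iota. Qed.

Lemma nth_history m k i x0 : i < k -> nth x0 (history m k) i = m i.
Proof. by move=> ik; rewrite /history (nth_map 0) ?size_iota // nth_iota. Qed.

Lemma take_history m k n : n <= k -> take n (history m k) = history m n.
Proof. by move=> nk; rewrite /history -map_take take_iota; congr (map _ (iota _ _)); lia. Qed.

Lemma history2 m k : history m k.+2 = history m k ++ [:: m k; m k.+1].
Proof. by rewrite /history -addn2 iotaD map_cat. Qed.

Lemma in_claimed2 B m k j : ~~ odd j -> j < k -> m j \in claimed2 B m k.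
Proof.
move=> ej jk; rewrite /claimed2 mem_cat; apply/orP; right.
by apply: map_f; rewrite mem_filter ej mem_iota.
Qed.

Theorem lemma4p1 (t : nat) (A B : seq edge) (c x y : nat) :
  3 <= t ->
  all is_edge A -> all is_edge B -> uniq A -> uniq B ->
  (forall e, e \in A -> e \notin B) ->
  size A = (size B).+1 ->
  ~ has_target t A -> ~ has_target t B ->
  (K_copy_in B t (t - 2) c x y \/ K_copy_in B t (t - 2) c y x) ->
  ~ threat t A B ->
  ~ (exists y', K_copy_in A t 0 c x y') ->
  ~ (exists y', K_copy_in A t 0 x c y') ->
  exists sigma : seq edge -> edge, P2_draw_strategy t A B sigma.
Proof.
move=> t3 _ _ _ _ _ _ HtA _ HcopyB Hthr Hii Hiii.
have [cx cy xy] : [/\ c != x, c != y & x != y].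
  case: HcopyB => [[Z [W [Hv _]]]|[Z [W [Hv _]]]]; have [[? ? ?] _ _ _ _] := valid_facts Hv => //.
  by split; rewrite // eq_sym.
exists (strat A B c x y) => m Hsig Hleg.
pose zz k := fresh A B c x y (history m k).
have zzB : forall k g, g \in B -> zz k \notin g.
  by move=> k g gB; apply: fresh_notin; rewrite !mem_cat gB orbT.
have zzA : forall k g, g \in A -> zz k \notin g.
  by move=> k g gA; apply: fresh_notin; rewrite !mem_cat gA.
have zzH : forall k g, g \in history m k -> zz k \notin g.
  by move=> k g gA; apply: fresh_notin; rewrite !mem_cat gA !orbT.
have Hstep : forall k, ~~ odd k -> m k.+2 =
   if (m k == [fset c; y; zz k]) && (m k.+1 != [fset c; x; zz k]) then [fset c; x; zz k]
   else [fset c; y; zz k.+2].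
  move=> k ek; rewrite (Hsig k.+2); last by rewrite /= negbK.
  rewrite /strat size_history !subSS !subn0 take_history //.
  rewrite /history !(nth_map 0) ?size_iota // !nth_iota // -/(history m k) -/(history m k.+2).
  exact: leqW (leqnSn k).
have Hstep0 : m 0 = [fset c; y; zz 0].
  by rewrite (Hsig 0) // /strat /=.
have isY : forall k, is_edge [fset c; y; zz k].
  move=> k; have [z1 z2 z3] := fresh_neq A B c x y (history m k).
  by rewrite /is_edge card3 // eq_sym.
have isX : forall k, is_edge [fset c; x; zz k].
  move=> k; have [z1 z2 z3] := fresh_neq A B c x y (history m k).
  by rewrite /is_edge card3 // eq_sym.
have legY : forall k, legal_move A B m k -> m k = [fset c; y; zz k] -> legal_move A B m k.
  by [].
have Yfresh : forall k, [fset c; y; zz k] \notin A ++ B ++ history m k.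
  move=> k; apply/negP => H; move: (fresh_notin c x y H); by rewrite mem3 eqxx !orbT.
have Xfresh : forall k, [fset c; x; zz k] \notin A ++ B ++ history m k.
  move=> k; apply/negP => H; move: (fresh_notin c x y H); by rewrite mem3 eqxx !orbT.
have leg2 : forall k, ~~ odd k -> legal_move A B m k.
  case => [_|[//|k]]; first by rewrite /legal_move Hstep0 isY Yfresh.
  rewrite /= negbK => ek; rewrite /legal_move (Hstep k ek).
  case: ifP => [/andP [/eqP E1 E2]|_]; last by rewrite isY Yfresh.
  rewrite isX /= history2 !mem_cat !inE negb_or.
  move: (Xfresh k); rewrite !mem_cat !negb_or => /and3P [h1 h2 h3].
  rewrite h1 (negbTE h2) (negbTE h3) E1 (eq_sym _ (m k.+1)) (negbTE E2) /= andbT.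
  apply/negP => /eqP E; have [z1 z2 z3] := fresh_neq A B c x y (history m k).
  have : x \in [fset c; y; zz k] by rewrite -E mem3 eqxx orbT.
  by rewrite mem3 (eq_sym x c) (negbTE cx) (negbTE xy) eq_sym (negbTE z2).
split; first exact: leg2.
move=> k Ht1.
pose dev i := (m i == [fset c; y; zz i]) && (m i.+1 != [fset c; x; zz i]).
case Hdev: (has (fun i => ~~ odd i && (i.+2 < k) && dev i) (iota 0 k)).
  have [i _ /andP [/andP [ei ik] /andP [/eqP Ei Di]]] := hasP Hdev.
  have Ei2 : m i.+2 = [fset c; x; zz i] by rewrite (Hstep i ei) Ei eqxx Di.
  have [z1 z2 z3] := fresh_neq A B c x y (history m i).
  have iY : [fset c; y; zz i] \in claimed2 B m k by rewrite -Ei in_claimed2 //; lia.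
  have iX : [fset c; x; zz i] \in claimed2 B m k by rewrite -Ei2 in_claimed2 //= negbK.
  have BP : {subset B <= claimed2 B m k} by move=> g gB; rewrite /claimed2 mem_cat gB.
  case: HcopyB => HcB.
    exists c, x, y; apply: (extend_copy HcB BP iX iY) => //; exact: zzB.
  exists c, y, x; apply: (extend_copy HcB BP iY iX) => //; exact: zzB.
have nodev : forall i, ~~ odd i -> i.+2 < k -> ~~ dev i.
  move=> i ei ik; apply/negP => D; move/negP: Hdev; apply; apply/hasP; exists i.
    by rewrite mem_iota; lia.
  by rewrite ei ik D.
have HY : forall i, ~~ odd i -> i < k -> m i = [fset c; y; zz i].
  case => [|[//|i]] // ; rewrite /= negbK => ei ik.
  rewrite (Hstep i ei); case: ifP => // D; exfalso; move: (nodev i ei ik); by rewrite /dev D.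
have HX : forall i, ~~ odd i -> i.+2 < k -> m i.+1 = [fset c; x; zz i].
  move=> i ei ik; move: (nodev i ei ik); rewrite /dev (HY i ei) ?eqxx /= ?negbK; last by lia.
  by move/eqP.
case: k Ht1 Hdev nodev HY HX => [|k] Ht1 Hdev nodev HY HX.
  by exfalso; apply: HtA; move: Ht1; rewrite /claimed1 /= cats0.
exfalso.
have eB : m k \notin B.
  have : legal_move A B m k by case: (boolP (odd k)) => ok; [apply: Hleg | apply: leg2].
  by rewrite /legal_move !mem_cat !negb_or => /andP [_ /and3P [_ ->]].
apply: (noTarget (B := B) (c := c) (x := x) (e := m k)
         (Fz := fun z => exists2 i, ~~ odd i /\ i.+2 < k.+1 & z = zz i) _ HtA Hthr Hii Hiii cx eB _ _ Ht1).
- lia.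
- move=> z [i _ ->]; have [z1 z2 _] := fresh_neq A B c x y (history m i); split => //; exact: zzA.
- move=> g; rewrite /claimed1 mem_cat => /orP [gA|]; first by constructor 1.
  case/mapP => j; rewrite mem_filter mem_iota => /andP [oj /andP [_ jk]] ->.
  case: (eqVneq j k) => [->|njk]; first by constructor 2.
  case: j oj jk njk => [//|i] /=; rewrite ltnS => ei ik nik.
  constructor 3; exists (zz i); first by exists i; split => //; lia.
  apply: HX => //; lia.
Qed.
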